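(* Let $n\ge 2$. Let $\hat a_{i,i-1}>0$ and $\hat b_{i,i-1}\in\mathbb{R}$ for $2\le i\le n$, and for $1\le m\le k\le n$ put $\hat a_{k,m}:=\prod_{i=m+1}^{k}\hat a_{i,i-1}$ (so $\hat a_{k,k}=1$). Let $L_i\in\mathbb{R}$ ($2\le i\le n$) and $R_i\in\mathbb{R}$ ($1\le i\le n-1$) satisfy $L_i=\hat a_{i,i-1}R_{i-1}+\hat b_{i,i-1}$ for $2\le i\le n$, and $L_i\le R_i$ for $2\le i\le n-1$. Suppose $\hat a_{j,1}=\prod_{i=2}^{j}\hat a_{i,i-1}\ge 1$ for all $2\le j\le n$. Then $$\sum_{i=2}^{n}\bigl(L_i-R_{i-1}\bigr)\le \frac{\hat a_{n,1}-1}{\hat a_{n,1}}\,L_n+\sum_{i=2}^{n}\frac{\hat b_{i,i-1}}{\hat a_{i,1}}.$$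
   Context: Setting: a timing packet traverses a chain of nodes $1,2,\ldots,n$. Node $i$ ($2\le i\le n$) records a receive time-stamp $L_i=\tau^{i,l}(t_{i,l})$ and node $i$ ($1\le i\le n-1$) a send time-stamp $R_i=\tau^{i,r}(t_{i,r})$, where the ''left'' and ''right'' clocks of intermediate nodes are arbitrary functions. The numbers $\hat a_{i,i-1},\hat b_{i,i-1}$ are the declared relative skews and offsets between adjacent nodes; the relation $L_i=\hat a_{i,i-1}R_{i-1}+\hat b_{i,i-1}$ is the skew-consistency condition, and $L_i\le R_i$ expresses causality (a node cannot forward before receiving). *)

(* Defs.v *)
From mathcomp Require Import all_boot all_order all_algebra.
Set Implicit Arguments. Unset Strict Implicit. Unset Printing Implicit Defensive.
Import Order.TTheory GRing.Theory Num.Theory.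
Local Open Scope ring_scope.

(* a i stands for the declared relative skew \hat a_{i,i-1} (meaningful for 2 <= i <= n).
   ahat a k m = \hat a_{k,m} = prod_{i=m+1}^{k} a i  (empty product = 1 when k = m). *)
Definition ahat (R : numDomainType) (a : nat -> R) (k m : nat) : R :=
  \prod_(m.+1 <= i < k.+1) a i.

(* Main.v *)
Require Import Defs.
From mathcomp Require Import all_boot all_order all_algebra.
From mathcomp Require Import ring lra.
Import Order.TTheory GRing.Theory Num.Theory.
Local Open Scope ring_scope.

Theorem lemma1 (R : realFieldType) (n : nat) (a b L Rs : nat -> R) :
  (2 <= n)%N ->
  (forall i, (2 <= i <= n)%N -> 0 < a i) ->
  (forall i, (2 <= i <= n)%N -> L i = a i * Rs i.-1 + b i) ->
  (forall i, (2 <= i <= n.-1)%N -> L i <= Rs i) ->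
  (forall j, (2 <= j <= n)%N -> 1 <= ahat a j 1) ->
  \sum_(2 <= i < n.+1) (L i - Rs i.-1)
    <= (ahat a n 1 - 1) / ahat a n 1 * L n
       + \sum_(2 <= i < n.+1) b i / ahat a i 1.
Proof.
move=> hn ha hL hLR hA.
have A1 : ahat a 1 1 = 1 by rewrite /ahat big_geq.
have AS : forall m, (1 <= m)%N -> ahat a m.+1 1 = ahat a m 1 * a m.+1.
  by move=> m hm; rewrite /ahat big_nat_recr.
have Apos : forall m, (1 <= m <= n)%N -> 0 < ahat a m 1.
  move=> m /andP[h1 h2]; case: (ltnP 1 m) => h.
    by apply: (lt_le_trans ltr01); apply: hA; rewrite h h2.
  have -> : m = 1%N by apply/eqP; rewrite eqn_leq h h1.
  by rewrite A1.
suff P : forall m, (1 <= m <= n)%N ->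
  \sum_(2 <= i < m.+1) (L i - Rs i.-1) - \sum_(2 <= i < m.+1) b i / ahat a i 1
   <= (ahat a m 1 - 1) / ahat a m 1 * L m.
  have := P n (ltac:(by rewrite leqnn andbT (leq_trans _ hn))); lra.
elim=> [//|m IH] /andP[h1 h2].
case: (posnP m) => [->|hm].
  rewrite !big_geq // A1; lra.
have {}IH := IH (ltac:(by rewrite hm /= ltnW)).
rewrite big_nat_recr //= [X in _ - X]big_nat_recr //=.
rewrite AS //.
have x0 := Apos m ltac:(by rewrite hm ltnW).
have y0 := ha m.+1 ltac:(by rewrite h2 (leq_ltn_trans hm)).
rewrite hL ?h2 ?(leq_ltn_trans hm) //=.
have hc : 0 <= (ahat a m 1 - 1) / ahat a m 1.
  case: (ltnP 1 m) => h.
    by apply: divr_ge0; [rewrite subr_ge0; apply: hA; rewrite h ltnW|exact: ltW].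
  have -> : m = 1%N by apply/eqP; rewrite eqn_leq h hm.
  by rewrite A1 subrr mul0r.
have hLm : (ahat a m 1 - 1) / ahat a m 1 * L m <= (ahat a m 1 - 1) / ahat a m 1 * Rs m.
  case: (ltnP 1 m) => h.
    apply: ler_wpM2l => //; apply: hLR; rewrite h /=.
    by case: n h2 {hn ha hL hA Apos IH} => // n' /=.
  have -> : m = 1%N by apply/eqP; rewrite eqn_leq h hm.
  by rewrite A1 subrr !mul0r.
set x := ahat a m 1 in IH x0 hc hLm *.
set y := a m.+1 in y0 *.
have E : (x - 1) / x * Rs m + (y * Rs m + b m.+1 - Rs m) - b m.+1 / (x * y)
   = (x * y - 1) / (x * y) * (y * Rs m + b m.+1).
  by field; rewrite ?gt_eqF ?mulr_gt0.
lra.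
Qed.
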